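(* Let $\Gamma=(V,E)$ be a weakly connected simple digraph and $G$ a finite group. Then there exists a map $\rho:E\to G$ such that the voltage graph $(\Gamma,\rho)$ is structurally balanced and nondegenerate if and only if $|V|\ge|G|$.
   Context: $e_{ij}$ is the edge $v_i\to v_j$. A semi-walk from $v_{i_1}$ to $v_{i_n}$ is $w=v_{i_1}a_1\dots a_{n-1}v_{i_n}$ with each $a_j\in\{e_{i_ji_{j+1}},e_{i_{j+1}i_j}\}$; it is closed if $v_{i_1}=v_{i_n}$. $\Gamma$ is weakly connected if any two vertices are joined by a semi-walk. Net voltage: $f(w)=\bar\rho(a_1)\cdots\bar\rho(a_{n-1})$ with $\bar\rho(a_j)=\rho(a_j)$ if $a_j=e_{i_ji_{j+1}}$ and $\rho(a_j)^{-1}$ otherwise; $f$ of a single-vertex semi-walk is the identity $\mathbf 1$. $(\Gamma,\rho)$ is structurally balanced if $f(w)=\mathbf 1$ for every closed semi-walk $w$. With $\mathrm{Net}(v_i,V)=\{f(w): w$ a semi-walk starting at $v_i\}$, $(\Gamma,\rho)$ is nondegenerate if $\mathrm{Net}(v_i,V)=G$ for some vertex $v_i$. *)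

(* Defs.v *)
From mathcomp Require Import all_boot all_fingroup.
Set Implicit Arguments. Unset Strict Implicit. Unset Printing Implicit Defensive.
Local Open Scope group_scope.

(* A simple digraph on a finite vertex set V is an irreflexive relation
   e : rel V (e u v means the edge e_uv : u -> v exists; no multi-edges).
   A semi-walk starting at x is encoded as a sequence of steps (y, d):
   the next vertex y and the direction d of the edge used
   (d = true: edge x -> y is traversed forwards;
    d = false: edge y -> x is traversed backwards). *)

Section SemiWalks.
Variables (V : finType) (e : rel V).

Definition simple_digraph := irreflexive e.

Fixpoint semiwalk (x : V) (s : seq (V * bool)) : bool :=
  match s with
  | [::] => true
  | (y, d) :: s' => (if d then e x y else e y x) && semiwalk y s'
  end.

Definition sw_end (x : V) (s : seq (V * bool)) : V := last x (map fst s).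

Definition weakly_connected : Prop :=
  forall u v : V, exists s, semiwalk u s /\ sw_end u s = v.

Variable gT : finGroupType.
(* voltage assignment; only its values on edges e u v are ever used *)
Variable rho : V -> V -> gT.

Fixpoint net_voltage (x : V) (s : seq (V * bool)) : gT :=
  match s with
  | [::] => 1
  | (y, d) :: s' => (if d then rho x y else (rho y x)^-1) * net_voltage y s'
  end.

Definition structurally_balanced : Prop :=
  forall x s, semiwalk x s -> sw_end x s = x -> net_voltage x s = 1.

Definition Net_full (v : V) : Prop :=
  forall g : gT, exists s, semiwalk v s /\ net_voltage v s = g.

Definition nondegenerate : Prop := exists v : V, Net_full v.

End SemiWalks.

(* Main.v *)
Require Import Defs.
From mathcomp Require Import all_boot all_fingroup.
Set Implicit Arguments. Unset Strict Implicit. Unset Printing Implicit Defensive.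
Local Open Scope group_scope.

Section Aux.
Variables (V : finType) (e : rel V) (gT : finGroupType) (rho : V -> V -> gT).

Lemma semiwalk_cat (x : V) (s1 s2 : seq (V * bool)) :
  semiwalk e x (s1 ++ s2) = semiwalk e x s1 && semiwalk e (sw_end x s1) s2.
Proof.
elim: s1 x => [|[y d] s IH] x //=.
by rewrite IH andbA.
Qed.

Lemma sw_end_cat (x : V) (s1 s2 : seq (V * bool)) : sw_end x (s1 ++ s2) = sw_end (sw_end x s1) s2.
Proof. by rewrite /sw_end map_cat last_cat. Qed.

Lemma net_cat (x : V) (s1 s2 : seq (V * bool)) :
  net_voltage rho x (s1 ++ s2) = net_voltage rho x s1 * net_voltage rho (sw_end x s1) s2.
Proof.
elim: s1 x => [|[y d] s IH] x /=; first by rewrite mul1g.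
by rewrite IH mulgA.
Qed.

Fixpoint rev_sw (x : V) (s : seq (V * bool)) : seq (V * bool) :=
  match s with
  | [::] => [::]
  | (y, d) :: s' => rcons (rev_sw y s') (x, ~~ d)
  end.

Lemma rev_sw_prop (x : V) (s : seq (V * bool)) : semiwalk e x s ->
  [/\ semiwalk e (sw_end x s) (rev_sw x s), sw_end (sw_end x s) (rev_sw x s) = x
    & net_voltage rho (sw_end x s) (rev_sw x s) = (net_voltage rho x s)^-1].
Proof.
elim: s x => [|[y d] s IH] x /=; first by rewrite invg1.
move=> /andP[hd hs]; have [h1 h2 h3] := IH y hs.
have -> : sw_end x ((y, d) :: s) = sw_end y s by [].
rewrite -cats1 semiwalk_cat sw_end_cat net_cat h1 h2 h3 /=.
split.
- by case: d hd => /=; rewrite andbT.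
- by rewrite /sw_end.
- by move: hd; case: d; rewrite /= mulg1 invMg ?invgK.
Qed.

End Aux.

Theorem theorem2 (V : finType) (e : rel V) (gT : finGroupType) :
  simple_digraph e -> weakly_connected e ->
  ((exists rho : V -> V -> gT,
      structurally_balanced e rho /\ nondegenerate e rho)
   <-> #|gT| <= #|V|).
Proof.
move=> _ hwc; split.
- move=> [rho [hb [v hv]]].
  have hv' g : exists s, semiwalk e v s && (net_voltage rho v s == g).
    by have [s [h1 h2]] := hv g; exists s; rewrite h1 h2 eqxx.
  pose wk g := xchoose (hv' g).
  have wkP g : semiwalk e v (wk g) /\ net_voltage rho v (wk g) = g.
    by have /andP[h1 /eqP h2] := xchooseP (hv' g).
  pose f g := sw_end v (wk g).
  have finj : injective f.
    move=> g1 g2 hf.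
    have [s1 n1] := wkP g1; have [s2 n2] := wkP g2.
    have [r1 r2 r3] := rev_sw_prop rho s2.
    have := hb v (wk g1 ++ rev_sw v (wk g2)).
    rewrite semiwalk_cat sw_end_cat net_cat s1.
    rewrite /f in hf; rewrite hf r1 r2 r3 n1 n2 => /(_ isT erefl) /eqP.
    by rewrite -eq_mulgV1 => /eqP.
  exact: leq_card finj.
- move=> hle.
  pose phi (w : V) : gT := nth 1 (enum gT) (enum_rank w).
  have phis g : exists w, phi w = g.
    have hi : index g (enum gT) < #|V|.
      by apply: leq_trans hle; rewrite cardE index_mem mem_enum.
    exists (enum_val (Ordinal hi)).
    by rewrite /phi enum_valK /= nth_index // mem_enum.
  exists (fun x y => (phi x)^-1 * phi y).
  have hnet x s : net_voltage (fun x y => (phi x)^-1 * phi y) x s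
                   = (phi x)^-1 * phi (sw_end x s).
    elim: s x => [|[y d] s IH] x /=; first by rewrite mulVg.
    rewrite IH.
    have -> : sw_end x ((y, d) :: s) = sw_end y s by [].
    by case: d; rewrite /= ?invMg ?invgK mulgA mulgK.
  split.
  + by move=> x s _ hend; rewrite hnet hend mulVg.
  + have [v _] := phis 1.
    exists v => g.
    have [w hw] := phis (phi v * g).
    have [s [hs hend]] := hwc v w.
    exists s; split => //.
    by rewrite hnet hend hw mulKg.
Qed.
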